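(* Let $n,k\ge 1$ be integers and let $X=\{0,1,\ldots,k\}^n$ with the $\ell_1$-metric. Suppose $X=X_1\cup\cdots\cup X_n$ and that for every point $x\in X$ the open ball of radius $n+1$ about $x$ is contained in some $X_i$. Then there is an index $i$ such that some $2$-component of $X_i$ contains two points whose $i$-th coordinates differ by $k$.
   Context: For $Y\subseteq X$ and $r>0$, two points of $Y$ lie in the same $r$-component of $Y$ if there is a sequence $y_0,\dots,y_m$ in $Y$ from one to the other with $d(y_j,y_{j+1})<r$ for all $j$. *)

(* Defs.v *)
From mathcomp Require Import all_boot.
Set Implicit Arguments. Unset Strict Implicit. Unset Printing Implicit Defensive.

Definition grid (n k : nat) : finType := {ffun 'I_n -> 'I_k.+1}.

Definition absdiff (a b : nat) : nat := maxn a b - minn a b.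

Definition l1dist (n k : nat) (x y : grid n k) : nat :=
  \sum_(j < n) absdiff (x j) (y j).

Definition same_rcomp (n k : nat) (Y : {set grid n k}) (r : nat)
    (x y : grid n k) : Prop :=
  exists s : seq (grid n k),
    [/\ all (fun z => z \in Y) (x :: s),
        path (fun a b => l1dist a b < r) x s
      & last x s = y].

(* Main.v *)
Require Import Defs.
From mathcomp Require Import all_boot.
From mathcomp Require Import fingroup perm zify.
From Stdlib Require Import Classical ClassicalEpsilon.
Set Implicit Arguments. Unset Strict Implicit. Unset Printing Implicit Defensive.

Lemma local_door (m : nat) (f : 'I_m.+1 -> 'I_m.+1) :
  odd #|[set j | f @: [set~ j] == [set~ ord_max]]| = (f @: setT == setT).
Proof.
have cC1 : forall j : 'I_m.+1, #|[set~ j]| = m.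
  by move=> j; rewrite cardsC1 card_ord.
case: (boolP (f @: setT == setT)) => [/eqP full|nfull].
  have finj : injective f.
    move=> x y; apply/(imset_injP (f := f) (D := setT)) => //.
    by rewrite full !cardsT.
  have [j0 _ fj0] : exists2 j0, j0 \in setT & ord_max = f j0.
    by apply/imsetP; rewrite full inE.
  suff -> : [set j | f @: [set~ j] == [set~ ord_max]] = [set j0] by rewrite cards1.
  apply/setP => j; rewrite !inE.
  have -> : f @: [set~ j] = [set~ f j].
    apply/eqP; rewrite eqEcard; apply/andP; split.
      apply/subsetP => y /imsetP [x]; rewrite !inE => xj ->.
      by apply: contra xj => /eqP /finj ->.
    by rewrite card_imset // !cC1.
  rewrite fj0; apply/eqP/eqP => [/setC_inj/set1_inj/finj|->] //.
case: (set_0Vmem [set j | f @: [set~ j] == [set~ ord_max]]) => [->|[j]].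
  by rewrite cards0.
rewrite inE => /eqP dj.
have injj : {in [set~ j] &, injective f}.
  by apply/imset_injP; rewrite dj !cC1.
have fjm : f j != ord_max.
  apply: contra nfull => /eqP fj; rewrite eqEsubset subsetT /=.
  apply/subsetP => y _; case: (boolP (y == ord_max)) => [/eqP ->|yn].
    by rewrite -fj imset_f.
  have : y \in f @: [set~ j] by rewrite dj !inE.
  by case/imsetP => x _ ->; apply: imset_f; rewrite inE.
have : f j \in f @: [set~ j] by rewrite dj !inE fjm.
case/imsetP => t; rewrite !inE => tj ftj.
suff -> : [set j | f @: [set~ j] == [set~ ord_max]] = [set j; t].
  by rewrite cards2 eq_sym tj.
apply/setP => j'; rewrite !inE.
case: (boolP (j' == j)) => [/eqP ->|j'j]; first by rewrite dj eqxx.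
case: (boolP (j' == t)) => [/eqP ->|j't] /=.
  apply/eqP; rewrite -dj; apply/setP => y; apply/imsetP/imsetP => [] [x].
    rewrite inE => xt ->; case: (boolP (x == j)) => [/eqP ->|xj].
      by exists t; rewrite ?inE // eq_sym.
    by exists x; rewrite ?inE.
  rewrite inE => xj ->; case: (boolP (x == t)) => [/eqP ->|xt].
    by exists j; rewrite ?inE // eq_sym.
  by exists x; rewrite ?inE.
apply/negP => /eqP dj'.
have : #|f @: [set~ j']| < m.
  have -> : f @: [set~ j'] = f @: ([set~ j'] :\ t).
    apply/setP => y; apply/imsetP/imsetP => [] [x].
      rewrite !inE => xj' ->; case: (boolP (x == t)) => [/eqP ->|xt].
        by exists j; rewrite // !inE (eq_sym j t) tj (eq_sym j j') j'j.
      by exists x; rewrite // !inE xt xj'.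
    by rewrite !inE => /andP [_ xj'] ->; exists x; rewrite ?inE.
  apply: leq_ltn_trans (leq_imset_card _ _) _.
  move: (cardsD1 t [set~ j']); rewrite !inE (eq_sym t j') j't cC1 /= => E.
  by rewrite [X in _ < X]E add1n ltnSn.
by rewrite dj' cC1 ltnn.
Qed.

Lemma inv_even (T : finType) (g : T -> T) (F : T -> nat) :
  involutive g -> (forall x, g x != x) -> (forall x, F (g x) = F x) ->
  ~~ odd (\sum_x F x).
Proof.
move=> gK gx Fg.
rewrite (bigID (fun x => enum_rank x < enum_rank (g x))) /=.
rewrite [X in _ + X](reindex_inj (inv_inj gK)) /= [X in _ + X](eq_bigl (fun x => enum_rank x < enum_rank (g x))).
  by rewrite [X in _ + X](eq_bigr F) ?addnn ?odd_double // => x _; rewrite Fg.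
move=> x /=; rewrite gK -leqNgt leq_eqVlt.
have -> : (enum_rank x == enum_rank (g x) :> nat) = false.
  by apply/negbTE/negP => /eqP /val_inj /enum_rank_inj E; move: (gx x); rewrite -E eqxx.
by [].
Qed.

Section Sp.
Variable K : nat.

Definition simp N := ({ffun 'I_N -> 'I_K.+1} * {perm 'I_N})%type.

Definition vert N (S : simp N) (t : nat) : {ffun 'I_N -> nat} :=
  [ffun i => S.1 i + (S.2 i < t)].

Definition good N (l : {ffun 'I_N -> nat} -> nat) :=
  forall x : {ffun 'I_N -> nat}, (forall i, x i <= K.+1) ->
  [/\ l x <= N, forall i : 'I_N, x i = 0 -> l x <> i
    & forall i : 'I_N, x i = K.+1 -> l x <= i].

Definition lab N l (S : simp N) (t : 'I_N.+1) : 'I_N.+1 := inord (l (vert S t)).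
Definition door N l (S : simp N) (j : 'I_N.+1) : bool :=
  (lab l S) @: [set~ j] == [set~ ord_max].
Definition full N l (S : simp N) : bool := (lab l S) @: setT == setT.

Lemma vert_le N (S : simp N) t i : vert S t i <= K.+1.
Proof. rewrite ffunE; case: (S.2 i < t); rewrite ?addn1 ?addn0 ?ltn_ord // ltnW // ltn_ord. Qed.

Lemma labE N l (S : simp N) t : good l -> lab l S t = l (vert S t) :> nat.
Proof.
move=> gl; rewrite inordK //; case: (gl _ (vert_le S t)) => ? _ _; lia.
Qed.

Definition swp n (j : nat) (S : simp n.+1) : simp n.+1 :=
  (S.1, (S.2 * tperm (inord j.-1) (inord j))%g).

Lemma middle n l (j : 'I_n.+2) : j != ord0 -> j != ord_max ->
  ~~ odd (\sum_(S : simp n.+1) door l S j).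
Proof.
move=> j0 jm.
have jlo : 0 < j by rewrite lt0n.
have jhi : j < n.+1 by move: jm (ltn_ord j); rewrite -val_eqE /=; lia.
have ea : (inord j.-1 : 'I_n.+1) = j.-1 :> nat by rewrite inordK //; lia.
have eb : (inord j : 'I_n.+1) = j :> nat by rewrite inordK.
have vs : forall (S : simp n.+1) (t : 'I_n.+2), t != j -> vert (swp j S) t = vert S t.
  move=> S t tj; apply/ffunP => i; rewrite !ffunE /= permM.
  have tj' : t <> j :> nat by move=> E; move: tj; rewrite (val_inj E) eqxx.
  case: tpermP => [->|->|_ _].
  - by rewrite ea eb; congr (_ + nat_of_bool _); apply/idP/idP; lia.
  - by rewrite ea eb; congr (_ + nat_of_bool _); apply/idP/idP; lia.
  - by [].
apply: (@inv_even _ (swp j)).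
- move=> [v p]; rewrite /swp /=; congr (_, _); apply/permP => i.
  by rewrite !permM tpermK.
- move=> [v p]; rewrite /swp /= xpair_eqE /= eqxx /=.
  apply/eqP => /(congr1 (fun q : {perm _} => q ((p^-1)%g (inord j)))).
  rewrite permM !permKV tpermR => /(congr1 (@nat_of_ord _)); rewrite ea eb; lia.
- move=> S; rewrite /door; suff -> : lab l (swp j S) @: [set~ j] = lab l S @: [set~ j] by [].
  apply: eq_in_imset => t; rewrite !inE => tj.
  by rewrite /lab (vs _ _ tj).
Qed.

Definition rotL n : {perm 'I_n.+1} := perm (@ord_pred_inj n.+1).
Arguments rotL : simpl never.

Lemma rotLE n (a : 'I_n.+1) : rotL n a = (if a == ord0 then n else a.-1) :> nat.
Proof.
rewrite permE /=; case: ifP => a0; first by rewrite (eqP a0) /= modn_small.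
have -> : (a + n.+1).-1 = a.-1 + n.+1 by move/negbT: a0; rewrite -val_eqE /=; lia.
by rewrite modnDr modn_small //; have := ltn_ord a; lia.
Qed.

Lemma rotL_max n (a : 'I_n.+1) : (rotL n a == ord_max) = (a == ord0).
Proof.
rewrite -val_eqE /= rotLE; case: ifP => H.
  by rewrite eqxx.
apply/negbTE; move/negbT: H; rewrite -val_eqE /=; have := ltn_ord a; lia.
Qed.

Lemma rotR0 n (a : 'I_n.+1) : (((rotL n)^-1)%g a == ord0) = (a == ord_max).
Proof.
rewrite -(inj_eq (@perm_inj _ (rotL n))) permKV.
have -> : rotL n ord0 = ord_max by apply/eqP; rewrite -val_eqE /= rotLE.
by [].
Qed.

Definition up n (S : simp n.+1) : simp n.+1 :=
  ([ffun i => inord (S.1 i + (S.2 i == ord0))], (S.2 * rotL n)%g).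
Definition down n (S : simp n.+1) : simp n.+1 :=
  ([ffun i => inord (S.1 i - (S.2 i == ord_max))], (S.2 * (rotL n)^-1)%g).
Definition int0 n (S : simp n.+1) := [forall i, (S.2 i == ord0) ==> (S.1 i < K)].
Definition intN n (S : simp n.+1) := [forall i, (S.2 i == ord_max) ==> (0 < S.1 i)].

Lemma vert_up n (S : simp n.+1) (t : nat) : int0 S -> t < n.+1 ->
  vert (up S) t = vert S t.+1.
Proof.
move=> /forallP h tn; apply/ffunP => i; rewrite !ffunE /= permM rotLE.
case: eqP => [E|/eqP NE].
  have := h i; rewrite E eqxx /= => vi; rewrite inordK; last by lia.
  have -> : (n < t) = false by apply/negbTE; lia.
  by rewrite addn1 addn0.
rewrite addn0 inordK; last by have := ltn_ord (S.1 i); lia.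
have : 0 < S.2 i by rewrite lt0n.
by case: (S.2 i : nat) => //= a _; rewrite ltnS.
Qed.

Lemma down_up n (S : simp n.+1) : int0 S -> down (up S) = S.
Proof.
case: S => v p /forallP h; rewrite /up /down /=; congr (_, _).
  apply/ffunP => i; rewrite !ffunE permM rotL_max; apply: val_inj => /=.
  case: eqP => [E|_] /=.
    have := h i; rewrite E eqxx /= => vi; rewrite !inordK; lia.
  by rewrite !inordK ?addn0 ?subn0 //; have := ltn_ord (v i); lia.
by apply/permP => i; rewrite !permM permK.
Qed.

Lemma up_down n (S : simp n.+1) : intN S -> up (down S) = S.
Proof.
case: S => v p /forallP h; rewrite /up /down /=; congr (_, _).
  apply/ffunP => i; rewrite !ffunE permM rotR0; apply: val_inj => /=.
  case: eqP => [E|_] /=.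
    have := h i; rewrite E eqxx /= => vi; rewrite !inordK; have := ltn_ord (v i); lia.
  by rewrite !inordK ?addn0 ?subn0 //; have := ltn_ord (v i); lia.
by apply/permP => i; rewrite !permM permKV.
Qed.


Lemma imset_shift (T : finType) n (f g : 'I_n.+2 -> T) :
  (forall t : 'I_n.+2, t < n.+1 -> f t = g (inord t.+1)) ->
  f @: [set~ ord_max] = g @: [set~ ord0].
Proof.
move=> fg; apply/setP => y; apply/imsetP/imsetP => -[t]; rewrite !inE => tn ->.
  have tn' : t < n.+1 by move: tn (ltn_ord t); rewrite -val_eqE /=; lia.
  exists (inord t.+1); last by rewrite fg.
  by rewrite !inE -val_eqE /= inordK.
have t0 : 0 < t by rewrite lt0n.
exists (inord t.-1).
  by rewrite !inE -val_eqE /= inordK; have := ltn_ord t; lia.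
rewrite fg; last by rewrite inordK; have := ltn_ord t; lia.
by congr g; apply/eqP; rewrite -val_eqE /= !inordK; have := ltn_ord t; lia.
Qed.

Lemma door_up n l (S : simp n.+1) : int0 S -> door l (up S) ord_max = door l S ord0.
Proof.
move=> h; rewrite /door (@imset_shift _ _ _ (lab l S)) // => t tn.
by rewrite /lab vert_up // inordK.
Qed.

Lemma int0_down n (T : simp n.+1) : intN T -> int0 (down T).
Proof.
move=> /forallP h; apply/forallP => i; rewrite /down /= permM rotR0 ffunE.
apply/implyP => /eqP E; have := h i; rewrite E eqxx /= => vi.
by rewrite inordK; have := ltn_ord (T.1 i); lia.
Qed.

Lemma ends_reindex n l :
  \sum_(S : simp n.+1 | int0 S) door l S ord0 =
  \sum_(S : simp n.+1 | intN S) door l S ord_max.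
Proof.
rewrite (reindex_onto (@down n) (@up n)) /=; last by move=> S h; rewrite down_up.
apply: eq_big => T.
  case: (boolP (intN T)) => h.
    by rewrite up_down // eqxx andbT int0_down.
  apply/negbTE; move: h; rewrite negb_forall => /existsP [i].
  rewrite negb_imply => /andP [/eqP E vi].
  have [K0|Kpos] := posnP K.
    apply/nandP; left; rewrite negb_forall; apply/existsP; exists i.
    by rewrite /down /= permM rotR0 E eqxx /= -leqNgt; lia.
  apply/nandP; right; apply/eqP => E2.
  have := congr1 (fun S : simp n.+1 => nat_of_ord (S.1 i)) E2.
  rewrite /up /down /= !ffunE permM rotR0 E eqxx /=.
  rewrite (@inordK K (_ - _)); last by have := ltn_ord (T.1 i); lia.
  by rewrite inordK; lia.
by move=> /andP [h1 /eqP h2]; rewrite -door_up // h2.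
Qed.

Lemma bdN n l (S : simp n.+1) : good l -> ~~ intN S -> door l S ord_max = false.
Proof.
move=> gl; rewrite negb_forall => /existsP [i]; rewrite negb_imply => /andP [/eqP E vi].
apply/negP => /eqP D.
have : (inord i : 'I_n.+2) \in lab l S @: [set~ ord_max].
  by rewrite D !inE -val_eqE /= inordK; have := ltn_ord i; lia.
case/imsetP => t; rewrite !inE => tm /(congr1 (@nat_of_ord _)).
rewrite labE // inordK; last by have := ltn_ord i; lia.
move=> li; case: (gl _ (vert_le S t)) => _ H0 _; apply: (H0 i) => //.
rewrite ffunE E; move: vi tm (ltn_ord t); rewrite -val_eqE /= lt0n negbK => /eqP ->.
by case: ltnP => //; lia.
Qed.

Lemma bd0 n l (S : simp n.+1) : good l -> ~~ int0 S -> door l S ord0 ->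
  (S.2 ord_max == ord0) && (S.1 ord_max == ord_max).
Proof.
move=> gl; rewrite negb_forall => /existsP [i]; rewrite negb_imply => /andP [/eqP E vi].
move=> /eqP D.
have : (inord n : 'I_n.+2) \in lab l S @: [set~ ord0].
  by rewrite D !inE -val_eqE /= inordK //; lia.
case/imsetP => t; rewrite !inE => t0 /(congr1 (@nat_of_ord _)).
rewrite labE // inordK // => li; case: (gl _ (vert_le S t)) => _ _ Hk.
have := Hk i; rewrite ffunE E -li.
have vK : S.1 i = K :> nat by have := ltn_ord (S.1 i); move: vi; rewrite -leqNgt; lia.
have t0' : 0 < t by move: t0; rewrite -val_eqE /= lt0n.
rewrite vK /= t0' addn1 => /(_ erefl) ni.
have im : i = ord_max by apply/eqP; rewrite -val_eqE /=; have := ltn_ord i; lia.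
move: E vK; rewrite im => E vK.
by rewrite E eqxx /= -val_eqE /= vK.
Qed.


Definition ext n (y : {ffun 'I_n -> nat}) : {ffun 'I_n.+1 -> nat} :=
  [ffun i => if unlift ord_max i is Some i' then y i' else K.+1].
Definition emb n (x : simp n) : simp n.+1 :=
  ([ffun i => if unlift ord_max i is Some i' then x.1 i' else ord_max],
   lift_perm ord_max ord0 x.2).
Definition pfun n (p : {perm 'I_n.+1}) (i : 'I_n) : 'I_n :=
  if p ord_max == ord0 then odflt i (unlift ord0 (p (lift ord_max i))) else i.

Lemma pfunE n (p : {perm 'I_n.+1}) i : p ord_max = ord0 ->
  lift ord0 (pfun p i) = p (lift ord_max i).
Proof.
move=> h; rewrite /pfun h eqxx; case: unliftP => [j -> //|E].
by move: E; rewrite -h => /perm_inj E; move: (neq_lift ord_max i); rewrite E eqxx.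
Qed.

Lemma pfun_inj n (p : {perm 'I_n.+1}) : injective (pfun p).
Proof.
case: (boolP (p ord_max == ord0)) => h a b E.
  apply: (@lift_inj _ ord_max); apply: (@perm_inj _ p).
  by rewrite -!pfunE ?(eqP h) // E.
by move: E; rewrite /pfun (negbTE h).
Qed.

Definition proj n (S : simp n.+1) : simp n :=
  ([ffun i => S.1 (lift ord_max i)], perm (@pfun_inj n S.2)).
Definition Qb n (S : simp n.+1) := (S.2 ord_max == ord0) && (S.1 ord_max == ord_max).

Lemma Q_emb n (x : simp n) : Qb (emb x).
Proof. by rewrite /Qb /emb /= lift_perm_id ffunE unlift_none !eqxx. Qed.

Lemma proj_emb n (x : simp n) : proj (emb x) = x.
Proof.
case: x => w p; rewrite /proj /emb /=; congr (_, _).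
  by apply/ffunP => i; rewrite !ffunE liftK.
apply/permP => i; rewrite permE /pfun /= lift_perm_id eqxx lift_perm_lift.
by rewrite liftK.
Qed.

Lemma emb_proj n (S : simp n.+1) : Qb S -> emb (proj S) = S.
Proof.
case: S => v p /andP [/eqP h1 /eqP h2]; rewrite /proj /emb /=; congr (_, _).
  by apply/ffunP => i; rewrite !ffunE; case: unliftP => [j ->|->]; rewrite ?ffunE.
apply/permP => i; case: (unliftP ord_max i) => [j ->|->].
  by rewrite lift_perm_lift permE pfunE.
by rewrite lift_perm_id.
Qed.

Lemma vert_emb n (x : simp n) (t : nat) : vert (emb x) t.+1 = ext (vert x t).
Proof.
apply/ffunP => i; rewrite !ffunE; case: (unliftP ord_max i) => [j ->|->].
  by rewrite lift_perm_lift lift0 ffunE.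
by rewrite /emb /= lift_perm_id /= addn1.
Qed.

Definition lext n (l : {ffun 'I_n.+1 -> nat} -> nat) (y : {ffun 'I_n -> nat}) :=
  l (ext y).

Lemma good_ext n l : good l -> good (@lext n l).
Proof.
move=> gl y yle.
have ele : forall i, ext y i <= K.+1.
  by move=> i; rewrite ffunE; case: unliftP => [j _|_].
case: (gl _ ele) => _ H0 Hk; rewrite /lext; split.
- by have := Hk ord_max; rewrite ffunE unlift_none => /(_ erefl).
- move=> i yi; have := H0 (lift ord_max i); rewrite ffunE liftK lift_max; exact.
- move=> i yi; have := Hk (lift ord_max i); rewrite ffunE liftK lift_max; exact.
Qed.

Lemma door_emb n l (x : simp n) : good l ->
  door l (emb x) ord0 = full (lext l) x.
Proof.
move=> gl; have gl' := good_ext gl.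
have key : forall t, lab l (emb x) (lift ord0 t) = lift ord_max (lab (lext l) x t).
  move=> t; apply: ord_inj; rewrite lift_max !labE // lift0 vert_emb.
  by [].
have A : lab l (emb x) @: [set~ ord0] = lift ord_max @: (lab (lext l) x @: setT).
  apply/setP => y; apply/imsetP/imsetP => -[t].
    rewrite !inE; case: (unliftP ord0 t) => [t' ->|->] H ->; last by rewrite eqxx in H.
    by exists (lab (lext l) x t'); rewrite ?key // imset_f.
  case/imsetP => t' _ -> ->; exists (lift ord0 t'); last by rewrite key.
  by rewrite !inE eq_sym neq_lift.
have B : [set~ ord_max] = lift ord_max @: [set: 'I_n.+1].
  apply/setP => y; rewrite !inE; case: (unliftP ord_max y) => [j ->|->].
    by rewrite eq_sym neq_lift imset_f.
  rewrite eqxx; apply/esym/negP => /imsetP [j _] /eqP; apply/negP.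
  by rewrite neq_lift.
by rewrite /door /full A B (inj_eq (imset_inj (@lift_inj _ ord_max))).
Qed.


Lemma sum_ends n (G : 'I_n.+2 -> nat) :
  (forall j : 'I_n.+2, j != ord0 -> j != ord_max -> ~~ odd (G j)) ->
  odd (\sum_j G j) = odd (G ord0 + G ord_max).
Proof.
move=> h; rewrite (big_morph odd oddD (erefl (odd 0))).
rewrite (bigD1 ord0) // (bigD1 ord_max) //= big1 ?addbF ?oddD //.
by move=> j /andP [j0 jm]; apply/negbTE; apply: h.
Qed.

Theorem sperner N l : good l -> odd (\sum_(S : simp N) full l S).
Proof.
elim: N l => [|n IH] l gl.
  rewrite (eq_bigr (fun _ => 1)); last first.
    move=> S _; suff -> : full l S by [].
    apply/eqP/setP => y; rewrite inE; apply/imsetP; exists ord0; first by rewrite inE.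
    by rewrite !ord1.
  by rewrite sum1_card card_prod card_ffun card_Sn !card_ord.
have E1 : odd (\sum_(S : simp n.+1) full l S) =
          odd (\sum_(S : simp n.+1) \sum_(j : 'I_n.+2) door l S j).
  rewrite [LHS](big_morph odd oddD (erefl (odd 0))) [RHS](big_morph odd oddD (erefl (odd 0))).
  apply: eq_bigr => S _.
  rewrite oddb.
  have -> : \sum_(j : 'I_n.+2) door l S j = #|[set j | door l S j]|.
    rewrite -sum1_card [RHS]big_mkcond /=; apply: eq_bigr => j _; rewrite inE.
    by case: (door l S j).
  by rewrite /door local_door.
rewrite E1 exchange_big /= (@sum_ends _ (fun j => \sum_(S : simp n.+1) door l S j)); last first.
  by move=> j j0 jm; apply: middle.
rewrite (bigID (@int0 n)) /= [X in _ + X](bigID (@intN n)) /=.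
rewrite [X in _ + (_ + X)]big1; last by move=> S h; rewrite bdN.
rewrite ends_reindex addn0.
have -> : \sum_(S : simp n.+1 | ~~ int0 S) door l S ord0 =
          \sum_(S : simp n.+1 | Qb S) door l S ord0.
  rewrite big_mkcond [RHS]big_mkcond /=; apply: eq_bigr => S _.
  case: (boolP (Qb S)) => q.
    have -> : ~~ int0 S.
      move: q => /andP [/eqP h1 /eqP h2]; apply/negP => /forallP /(_ ord_max).
      by rewrite h1 eqxx /= h2 ltnn.
    by [].
  case: (boolP (int0 S)) => //= h; case: (boolP (door l S ord0)) => // d.
  by move: q; rewrite /Qb (bd0 gl h d).
have -> : \sum_(S : simp n.+1 | Qb S) door l S ord0 = \sum_(x : simp n) full (lext l) x.
  rewrite (reindex_onto (@emb n) (@proj n)) /=; last by move=> S q; rewrite emb_proj.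
  apply: eq_big => x; first by rewrite Q_emb proj_emb eqxx.
  by move=> _; rewrite door_emb.
have := IH _ (good_ext gl); rewrite !oddD.
by case: (odd _) => //; case: (odd _).
Qed.

End Sp.

Lemma absdiffC a b : absdiff a b = absdiff b a.
Proof. by rewrite /absdiff maxnC minnC. Qed.

Lemma absdiff_add a c : absdiff a (a + c) = c.
Proof. rewrite /absdiff; lia. Qed.

Lemma rc_refl n k (Y : {set grid n k}) r x : x \in Y -> same_rcomp Y r x x.
Proof. by move=> xY; exists [::]; split => //=; rewrite xY. Qed.

Lemma rc_trans n k (Y : {set grid n k}) r x y z :
  same_rcomp Y r x y -> same_rcomp Y r y z -> same_rcomp Y r x z.
Proof.
move=> [s1 [a1 p1 l1]] [s2 [a2 p2 l2]]; exists (s1 ++ s2); split.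
- by rewrite /= all_cat; move: a1 a2 => /= /andP [-> ->] /andP [_ ->].
- by rewrite cat_path p1 l1 p2.
- by rewrite last_cat l1.
Qed.

Lemma rc_step n k (Y : {set grid n k}) r x y :
  x \in Y -> y \in Y -> l1dist x y < r -> same_rcomp Y r x y.
Proof. by move=> xY yY d; exists [:: y]; split => /=; rewrite ?xY ?yY ?d. Qed.

Definition asb (P : Prop) : bool :=
  if excluded_middle_informative P then true else false.
Lemma asbP (P : Prop) : reflect P (asb P).
Proof. by rewrite /asb; case: excluded_middle_informative => h; constructor. Qed.

Definition toG n K (x : {ffun 'I_n -> nat}) : grid n K.+1 := [ffun i => inord (x i)].

Lemma toGE n K (x : {ffun 'I_n -> nat}) i : x i <= K.+1 -> (toG K x i : nat) = x i.
Proof. by move=> h; rewrite /toG ffunE inordK. Qed.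

Lemma l1_vert n K (S : simp K n) t : l1dist (toG K (vert S 0)) (toG K (vert S t)) <= n.
Proof.
rewrite /l1dist -[X in _ <= X]card_ord -sum1_card.
apply: leq_sum => i _; rewrite !toGE ?vert_le // !ffunE ltn0 addn0 absdiff_add.
by case: (_ < _).
Qed.

Lemma l1_step n K (S : simp K n) (b : nat) : b < n ->
  l1dist (toG K (vert S b)) (toG K (vert S b.+1)) < 2.
Proof.
move=> bn; rewrite /l1dist (bigD1 ((S.2)^-1%g (Ordinal bn))) //= big1.
  rewrite !toGE ?vert_le // !ffunE permKV /= ltnn ltnSn addn0 /absdiff; lia.
move=> i ih; rewrite !toGE ?vert_le // !ffunE.
have : S.2 i != Ordinal bn.
  by apply: contra ih => /eqP <-; rewrite permK.
rewrite -val_eqE /= => ne.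
have -> : (S.2 i < b.+1) = (S.2 i < b) by apply/idP/idP; lia.
by rewrite /absdiff; lia.
Qed.

Lemma chain n K (S : simp K n) (Y : {set grid n K.+1}) :
  (forall t, t <= n -> toG K (vert S t) \in Y) ->
  forall a b, a <= n -> b <= n -> same_rcomp Y 2 (toG K (vert S a)) (toG K (vert S b)).
Proof.
move=> hY.
suff H : forall a d, a + d <= n ->
    same_rcomp Y 2 (toG K (vert S a)) (toG K (vert S (a + d))) /\
    same_rcomp Y 2 (toG K (vert S (a + d))) (toG K (vert S a)).
  move=> a b an bn; case: (leqP a b) => ab.
    by have [H1 _] := H a (b - a) (ltac:(lia)); rewrite subnKC in H1.
  by have [_ H2] := H b (a - b) (ltac:(lia)); rewrite subnKC in H2 => //; lia.
move=> a; elim => [|d IH] ad; first by rewrite addn0; split; apply: rc_refl; apply: hY; lia.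
have [IH1 IH2] := IH (ltac:(lia)).
have st := l1_step S (ltac:(lia) : a + d < n).
rewrite addnS; split.
  apply: rc_trans IH1 _; apply: rc_step => //; apply: hY; lia.
apply: rc_trans _ IH2; apply: rc_step; rewrite ?absdiffC //; try (apply: hY; lia).
by rewrite /l1dist (eq_bigr _ (fun i _ => absdiffC _ _)).
Qed.

Theorem lemma2p2 (n k : nat) (hn : 0 < n) (hk : 0 < k)
    (Xs : 'I_n -> {set grid n k})
    (hcover : forall x : grid n k, exists i : 'I_n, x \in Xs i)
    (hball : forall x : grid n k, exists i : 'I_n,
        forall y : grid n k, l1dist x y < n.+1 -> y \in Xs i) :
  exists i : 'I_n, exists y z : grid n k,
    [/\ same_rcomp (Xs i) 2 y z & absdiff (y i) (z i) = k].
Proof.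
case: k hk Xs hcover hball => // K _ Xs _ hball.
apply: NNPP => NG.
pose inW (i : 'I_n) (x : grid n K.+1) : bool :=
  asb ((x i : nat) = 0 \/ exists y : grid n K.+1, (y i : nat) = 0 /\ same_rcomp (Xs i) 2 y x).
pose ell (x : {ffun 'I_n -> nat}) := find (fun i => ~~ inW i (toG K x)) (enum 'I_n).
have nthE : forall (i0 : 'I_n) (m : nat) (mn : m < n), nth i0 (enum 'I_n) m = Ordinal mn.
  by move=> i0 m mn; apply: val_inj; rewrite /= nth_enum_ord.
have labn : forall x, ell x <= n by move=> x; rewrite -[X in _ <= X]size_enum_ord find_size.
have labW : forall x (ln : ell x < n), ~~ inW (Ordinal ln) (toG K x).
  move=> x ln; rewrite -(nthE (Ordinal ln)).
  apply: (@nth_find _ _ (fun i => ~~ inW i (toG K x))).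
  by rewrite has_find size_enum_ord.
have labB : forall x (i : 'I_n), i < ell x -> inW i (toG K x).
  move=> x i il; have := @before_find _ i (fun i => ~~ inW i (toG K x)) (enum 'I_n) i il.
  by rewrite (nthE i i (ltn_ord i)) => /negbFE; congr (inW _ _); apply: val_inj.
have gl : good K ell.
  move=> x xle; split => //.
  - move=> i xi li; have ln : ell x < n by rewrite li.
    move: (labW x ln); have -> : Ordinal ln = i by apply: val_inj.
    by move/asbP; apply; left; rewrite toGE ?xi.
  - move=> i xi; rewrite leqNgt; apply/negP => /labB /asbP [].
      by rewrite toGE // xi.
    move=> [y [y0 yc]]; apply: NG; exists i, y, (toG K x); split => //.
    by rewrite y0 toGE // xi /absdiff; lia.
have := sperner gl; case: (pickP (@full K n ell)) => [S fS _|none]; last first.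
  by rewrite big1 // => S _; rewrite none.
have [j hj] := hball (toG K (vert S 0)).
have inX : forall t, t <= n -> toG K (vert S t) \in Xs j.
  by move=> t _; apply: hj; rewrite ltnS l1_vert.
have getT : forall a, a <= n -> exists t : 'I_n.+1, ell (vert S t) = a.
  move=> a an; have : (inord a : 'I_n.+1) \in [set lab ell S x | x in setT].
    by rewrite (eqP fS) inE.
  case/imsetP => t _ /(congr1 (@nat_of_ord _)); rewrite labE // inordK // => E.
  by exists t.
have [t1 E1] := getT j.+1 (ltn_ord j).
have [t0 E0] := getT j (ltnW (ltn_ord j)).
have uW : inW j (toG K (vert S t1)) by apply: labB; rewrite E1.
have jn : ell (vert S t0) < n by rewrite E0.
have wW := labW _ jn; move: wW; have -> : Ordinal jn = j by apply: val_inj.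
move=> /negP; apply.
have ch := chain inX (ltn_ord t1) (ltn_ord t0) .
apply/asbP; right; move/asbP: uW => [u0|[y [y0 yc]]].
  by exists (toG K (vert S t1)); split => //.
by exists y; split => //; apply: rc_trans yc ch.
Qed.
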